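(* Let $\tilde f$ satisfy (H1), (H2) and (H3). For $i\in\{0,1\}$, $\rho_{\tilde A_i}(\tilde f)$ is contained in the convex hull of $\rho_{\Theta(\tilde A_i)}(\tilde f)$. In particular $\rho_{\tilde A_0}(\tilde f)\subset(0,+\infty)$ and $\rho_{\tilde A_1}(\tilde f)\subset(-\infty,0)$.
   Context: Let $\tilde f$ be a homeomorphism of $\mathbb{R}^2$ isotopic to the identity and commuting with $T(x,y)=(x+1,y)$; $p_1$ is the first coordinate projection. For a horizontal line $\Gamma$, $U^+_\Gamma$ and $U^-_\Gamma$ denote the open half-planes above and below $\Gamma$. Hypotheses: (H1) $\Gamma_0,\Gamma_1,\Gamma_2$ are horizontal lines with $\Gamma_0\subset U^+_{\Gamma_1}$, $\Gamma_1\subset U^+_{\Gamma_2}$, and $\tilde f(\Gamma_j)\subset U^-_{\Gamma_j}$ for $j=0,1,2$; (H2) $\tilde f^n(\Gamma_0)\cap\Gamma_2\ne\emptyset$ for every integer $n\ge1$; (H3) for $i\in\{0,1\}$, letting $\tilde A_i$ be the closed band between $\Gamma_i$ and $\Gamma_{i+1}$, the sets $\Theta(\tilde A_0),\Theta(\tilde A_1)$ are non-empty and $\rho_{\Theta(\tilde A_0)}(\tilde f)\subset(0,+\infty)$, $\rho_{\Theta(\tilde A_1)}(\tilde f)\subset(-\infty,0)$. Here $\Theta(\tilde E)=\{x\in\tilde E:\tilde f^n(x)\in\tilde E\ \forall n\in\mathbb{Z}\}$, and for a closed $T$-invariant set $\tilde E$ contained in a horizontal band, $\rho_{\tilde E}(\tilde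 f)=\bigcap_{m\ge1}\mathrm{Cl}\big(\bigcup_{n\ge m}\{\frac1n(p_1(\tilde f^n(\tilde z))-p_1(\tilde z)): \tilde z\in\tilde E,\ \tilde f^n(\tilde z)\in\tilde E\}\big)$, closure in $\overline{\mathbb{R}}=\mathbb{R}\cup\{\pm\infty\}$. *)

(* Defs.v *)
From Stdlib Require Import Reals Lra ZArith.
Open Scope R_scope.

Definition R2 : Type := (R * R)%type.

(* max-metric on R^2 (induces the usual topology) *)
Definition d2 (z w : R2) : R := Rmax (Rabs (fst z - fst w)) (Rabs (snd z - snd w)).

Definition continuous2 (f : R2 -> R2) : Prop :=
  forall z eps, 0 < eps -> exists delta, 0 < delta /\
    forall w, d2 w z < delta -> d2 (f w) (f z) < eps.

Definition is_homeo (f g : R2 -> R2) : Prop :=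
  continuous2 f /\ continuous2 g /\
  (forall z, f (g z) = z) /\ (forall z, g (f z) = z).

Definition isotopic_to_id (f : R2 -> R2) : Prop :=
  exists H : R -> R2 -> R2,
    (forall t z eps, 0 <= t <= 1 -> 0 < eps -> exists delta, 0 < delta /\
       forall s w, 0 <= s <= 1 -> Rabs (s - t) < delta -> d2 w z < delta ->
         d2 (H s w) (H t z) < eps) /\
    (forall t, 0 <= t <= 1 -> exists g, is_homeo (H t) g) /\
    (forall z, H 0 z = z) /\ (forall z, H 1 z = f z).

Definition Tr (z : R2) : R2 := (fst z + 1, snd z).

Definition iterz (f g : R2 -> R2) (n : Z) : R2 -> R2 :=
  match n with
  | Z0 => fun z => z
  | Zpos p => Nat.iter (Pos.to_nat p) f
  | Zneg p => Nat.iter (Pos.to_nat p) g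
  end.

Definition Theta (f g : R2 -> R2) (E : R2 -> Prop) : R2 -> Prop :=
  fun z => E z /\ forall n : Z, E (iterz f g n z).

Definition band (a b : R) : R2 -> Prop := fun z => a <= snd z <= b.

Inductive Rbar : Type := Fin (r : R) | PInf | NInf.

Definition Rbar_le (x y : Rbar) : Prop :=
  match x, y with
  | NInf, _ => True
  | _, PInf => True
  | Fin a, Fin b => a <= b
  | _, _ => False
  end.

(* basic neighbourhoods of x in Rbar, parametrized by e > 0 *)
Definition Rbar_ball (x : Rbar) (e : R) (y : Rbar) : Prop :=
  match x, y with
  | Fin a, Fin b => Rabs (b - a) < e
  | PInf, Fin b => 1 / e < b
  | PInf, PInf => True
  | NInf, Fin b => b < - (1 / e)
  | NInf, NInf => True
  | _, _ => False
  end.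

Definition in_closure (S : Rbar -> Prop) (x : Rbar) : Prop :=
  forall e, 0 < e -> exists y, S y /\ Rbar_ball x e y.

Definition rot_set (f : R2 -> R2) (E : R2 -> Prop) : Rbar -> Prop :=
  fun x => forall m : nat, (1 <= m)%nat ->
    in_closure (fun y => exists (n : nat) (z : R2),
        (m <= n)%nat /\ E z /\ E (Nat.iter n f z) /\
        y = Fin ((fst (Nat.iter n f z) - fst z) / INR n)) x.

Definition conv_hull (S : Rbar -> Prop) : Rbar -> Prop :=
  fun x => exists a b, S a /\ S b /\ Rbar_le a x /\ Rbar_le x b.

Definition sub_pos (S : Rbar -> Prop) : Prop :=
  forall x, S x -> exists r, x = Fin r /\ 0 < r.
Definition sub_neg (S : Rbar -> Prop) : Prop :=
  forall x, S x -> exists r, x = Fin r /\ r < 0.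

(* Main.v *)
Require Import Defs.
From Stdlib Require Import Reals Lra ZArith Arith Lia Classical ClassicalEpsilon.
From Coquelicot Require Compactness.
Open Scope R_scope.

Lemma d2_fst z w : Rabs (fst z - fst w) <= Defs.d2 z w.
Proof. unfold Defs.d2; apply Rmax_l. Qed.
Lemma d2_snd z w : Rabs (snd z - snd w) <= Defs.d2 z w.
Proof. unfold Defs.d2; apply Rmax_r. Qed.
Lemma d2_lt z w r : Rabs (fst z - fst w) < r -> Rabs (snd z - snd w) < r -> Defs.d2 z w < r.
Proof. intros; unfold Defs.d2; apply Rmax_lub_lt; auto. Qed.

Lemma cont_comp f h : continuous2 f -> continuous2 h -> continuous2 (fun z => f (h z)).
Proof.
  intros Hf Hh z eps He.
  destruct (Hf (h z) eps He) as [d1 [Hd1 H1]].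
  destruct (Hh z d1 Hd1) as [d2' [Hd2 H2]].
  exists d2'; split; auto.
Qed.

Lemma cont_id : continuous2 (fun z => z).
Proof. intros z eps He; exists eps; auto. Qed.

Lemma cont_iter f n : continuous2 f -> continuous2 (Nat.iter n f).
Proof.
  intros Hf; induction n; simpl.
  - apply cont_id.
  - apply (cont_comp f (Nat.iter n f)); auto.
Qed.

Lemma cont_iterz f g k : continuous2 f -> continuous2 g -> continuous2 (iterz f g k).
Proof. intros; destruct k; simpl; [apply cont_id| apply cont_iter; auto | apply cont_iter; auto]. Qed.

Lemma cover (a b a' b' : R) (P : R -> R -> nat -> Prop) :
 (forall u v, a<=u<=b -> a'<=v<=b' -> exists r, 0<r /\ exists N,
     forall x y, Rabs(x-u)<r -> Rabs(y-v)<r -> P x y N) ->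
 exists M, forall x y, a<=x<=b -> a'<=y<=b' -> exists N, (N<=M)%nat /\ P x y N.
Proof.
  intros H.
  assert (Hex : forall u v, exists rN : R * nat, 0 < fst rN /\
     (a<=u<=b -> a'<=v<=b' -> forall x y, Rabs(x-u)<fst rN -> Rabs(y-v)<fst rN -> P x y (snd rN))).
  { intros u v. destruct (classic (a<=u<=b /\ a'<=v<=b')) as [[H1 H2]|Hn].
    - destruct (H u v H1 H2) as [r [Hr [N HN]]]. exists (r, N); simpl; split; auto.
    - exists (1, 0%nat); simpl; split; [lra|]. intros; exfalso; tauto. }
  set (F := fun u v => proj1_sig (constructive_indefinite_description _ (Hex u v))).
  assert (HF : forall u v, 0 < fst (F u v) /\
     (a<=u<=b -> a'<=v<=b' -> forall x y, Rabs(x-u)<fst (F u v) -> Rabs(y-v)<fst (F u v) -> P x y (snd (F u v)))).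
  { intros u v. unfold F. destruct (constructive_indefinite_description _ (Hex u v)); simpl; auto. }
  assert (Hpos : forall u v, 0 < Rmin (fst (F u v)) (/ (INR (snd (F u v)) + 1))).
  { intros u v. apply Rmin_glb_lt. apply HF. apply Rinv_0_lt_compat.
    pose proof (pos_INR (snd (F u v))); lra. }
  set (delta := fun u v => mkposreal _ (Hpos u v)).
  destruct (Compactness.compactness_value_2d a b a' b' delta) as [d Hd].
  exists (Z.to_nat (up (/ d))).
  intros x y Hx Hy.
  pose proof (Hd x y Hx Hy) as Hnn.
  apply NNPP in Hnn. destruct Hnn as [u [v [Hu [Hv [H1 [H2 H3]]]]]].
  simpl in H1, H2, H3.
  exists (snd (F u v)). split.
  - apply INR_le.
    assert (Hd0 : 0 < d) by apply cond_pos.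
    assert (Hm : d <= / (INR (snd (F u v)) + 1)) by (eapply Rle_trans; [apply H3| apply Rmin_r]).
    assert (Hn0 : 0 < INR (snd (F u v)) + 1) by (pose proof (pos_INR (snd (F u v))); lra).
    assert (Hq : INR (snd (F u v)) + 1 <= / d).
    { apply Rmult_le_reg_l with d; auto.
      rewrite Rinv_r by lra.
      apply Rmult_le_reg_r with (/ (INR (snd (F u v)) + 1)). apply Rinv_0_lt_compat; lra.
      rewrite Rmult_assoc, Rinv_r by lra. lra. }
    destruct (archimed (/ d)) as [Ha _].
    rewrite (INR_IZR_INZ (Z.to_nat _)), Z2Nat.id.
    + lra.
    + apply le_IZR. pose proof (Rinv_0_lt_compat d Hd0). lra.
  - apply (proj2 (HF u v)); auto.
    + eapply Rlt_le_trans; [apply H1| apply Rmin_l].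
    + eapply Rlt_le_trans; [apply H2| apply Rmin_l].
Qed.

Definition shr (a : R) (z : R2) : R2 := (fst z + a, snd z).
Definition commT (h : R2 -> R2) := forall z, h (Tr z) = Tr (h z).

Lemma shr0 z : shr 0 z = z.
Proof. destruct z; unfold shr; simpl; f_equal; ring. Qed.
Lemma shr_shr a b z : shr a (shr b z) = shr (b + a) z.
Proof. destruct z; unfold shr; simpl; f_equal; ring. Qed.

Lemma commT_nat h : commT h -> forall n z, h (shr (INR n) z) = shr (INR n) (h z).
Proof.
  intros Hc n; induction n; intros z.
  - simpl; rewrite !shr0; auto.
  - assert (E : forall w, shr (INR (S n)) w = Tr (shr (INR n) w)).
    { intros [x y]; unfold shr, Tr; cbn [fst snd]; rewrite S_INR; f_equal; ring. }
    rewrite !E, Hc, IHn; auto.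
Qed.

Lemma commT_neg h : commT h -> forall n z, h (shr (- INR n) z) = shr (- INR n) (h z).
Proof.
  intros Hc n z.
  assert (Hz : z = shr (INR n) (shr (- INR n) z)) by (rewrite shr_shr; replace (- INR n + INR n) with 0 by ring; rewrite shr0; auto).
  pattern z at 2; rewrite Hz. rewrite commT_nat; auto. rewrite shr_shr.
  replace (INR n + - INR n) with 0 by ring; rewrite shr0; auto.
Qed.

Lemma commT_Z h : commT h -> forall k z, h (shr (IZR k) z) = shr (IZR k) (h z).
Proof.
  intros Hc k z; destruct k.
  - simpl; rewrite !shr0; auto.
  - replace (IZR (Z.pos p)) with (INR (Pos.to_nat p)).
    + apply commT_nat; auto.
    + rewrite INR_IZR_INZ, positive_nat_Z; auto.
  - replace (IZR (Z.neg p)) with (- INR (Pos.to_nat p)).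
    + apply commT_neg; auto.
    + rewrite INR_IZR_INZ, positive_nat_Z, <- Pos2Z.opp_pos, opp_IZR; auto.
Qed.

Lemma commT_comp h k : commT h -> commT k -> commT (fun z => h (k z)).
Proof. intros H1 H2 z; rewrite H2, H1; auto. Qed.

Lemma commT_iter h n : commT h -> commT (Nat.iter n h).
Proof.
  intros Hc; induction n; simpl.
  - intros z; auto.
  - intros z; unfold commT in *; simpl; rewrite IHn, Hc; auto.
Qed.

Lemma commT_inv f g : is_homeo f g -> commT f -> commT g.
Proof.
  intros [_ [_ [Hfg Hgf]]] Hc z.
  rewrite <- (Hfg z) at 1. rewrite <- Hc, Hgf; auto.
Qed.

Lemma commT_iterz f g k : is_homeo f g -> commT f -> commT (iterz f g k).
Proof.
  intros Hh Hc; destruct k; simpl.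
  - intros z; auto.
  - apply commT_iter; auto.
  - apply commT_iter; eapply commT_inv; eauto.
Qed.

Lemma to_unit (z : R2) : exists k, 0 <= fst z + IZR k <= 1.
Proof.
  destruct (archimed (fst z)) as [H1 H2].
  exists (1 - up (fst z))%Z. rewrite minus_IZR. simpl. lra.
Qed.

Definition rcont (phi : R2 -> R) := forall z eps, 0 < eps -> exists delta, 0 < delta /\
   forall w, Defs.d2 w z < delta -> Rabs (phi w - phi z) < eps.

Lemma rcont_disp h : continuous2 h -> rcont (fun w => fst (h w) - fst w).
Proof.
  intros Hc z eps He.
  destruct (Hc z (eps/2)) as [d [Hd H]]; [lra|].
  exists (Rmin d (eps/2)); split; [apply Rmin_pos; lra|].
  intros w Hw.
  assert (H1 : Defs.d2 w z < d) by (eapply Rlt_le_trans; [apply Hw| apply Rmin_l]).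
  assert (H2 : Defs.d2 w z < eps/2) by (eapply Rlt_le_trans; [apply Hw| apply Rmin_r]).
  pose proof (H w H1) as H3.
  pose proof (d2_fst (h w) (h z)). pose proof (d2_fst w z).
  replace (fst (h w) - fst w - (fst (h z) - fst z)) with ((fst (h w) - fst (h z)) - (fst w - fst z)) by ring.
  eapply Rle_lt_trans; [apply Rabs_triang|]. rewrite Rabs_Ropp. lra.
Qed.

Lemma rcont_snd h : continuous2 h -> rcont (fun w => snd (h w)).
Proof.
  intros Hc z eps He.
  destruct (Hc z eps He) as [d [Hd H]]. exists d; split; auto.
  intros w Hw. pose proof (H w Hw). pose proof (d2_snd (h w) (h z)). lra.
Qed.

Lemma nat_above r : exists N, r <= INR N.
Proof.
  destruct (archimed r) as [H1 _].
  destruct (Z_lt_le_dec (up r) 0) as [Hl|Hl].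
  - exists 0%nat. simpl. apply IZR_lt in Hl. lra.
  - exists (Z.to_nat (up r)). rewrite INR_IZR_INZ, Z2Nat.id; auto. lra.
Qed.

Lemma bound_band phi lo hi : rcont phi -> (forall k z, phi (shr (IZR k) z) = phi z) ->
  exists K, forall w, lo <= snd w <= hi -> Rabs (phi w) <= K.
Proof.
  intros Hc Hs.
  destruct (cover 0 1 lo hi (fun x y N => Rabs (phi (x,y)) <= INR N)) as [M HM].
  - intros u v _ _.
    destruct (Hc (u,v) 1 Rlt_0_1) as [d [Hd H]].
    exists d; split; auto.
    destruct (nat_above (Rabs (phi (u,v)) + 1)) as [N HN]. exists N.
    intros x y Hx Hy.
    assert (Hw : Defs.d2 (x,y) (u,v) < d) by (apply d2_lt; simpl; auto).
    pose proof (H _ Hw).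
    pose proof (Rabs_triang_inv (phi (x,y)) (phi (u,v))). lra.
  - exists (INR M). intros w Hw.
    destruct (to_unit w) as [k Hk].
    destruct (HM (fst w + IZR k) (snd w) Hk Hw) as [N [HN HP]].
    rewrite <- (Hs k w). unfold shr.
    eapply Rle_trans; [apply HP| apply le_INR; auto].
Qed.

Lemma cross f g c : is_homeo f g -> (forall x, snd (f (x,c)) < c) ->
  forall w1 w2, snd w1 < c -> c < snd w2 -> c <= snd (f w1) -> c <= snd (f w2) -> False.
Proof.
  intros Hh Hl w1 w2 H1 H2 H3 H4.
  destruct Hh as [Hf [Hg [Hfg Hgf]]].
  set (a := f w1) in *. set (b := f w2) in *.
  set (seg := fun t => ((1-t)*fst a + t*fst b, (1-t)*snd a + t*snd b)).
  set (phi := fun t => snd (g (seg t)) - c).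
  assert (Hc : continuity phi).
  { intros t. unfold continuity_pt, continue_in, limit1_in, limit_in. simpl. unfold R_dist.
    intros eps He.
    destruct (Hg (seg t) eps He) as [d [Hd H]].
    set (M := 1 + Rabs (fst b - fst a) + Rabs (snd b - snd a)).
    assert (HM : 0 < M) by (unfold M; pose proof (Rabs_pos (fst b - fst a)); pose proof (Rabs_pos (snd b - snd a)); lra).
    exists (d / M). split. { apply Rdiv_lt_0_compat; auto. }
    intros t' [_ Ht'].
    assert (Hd2 : Defs.d2 (seg t') (seg t) < d).
    { assert (Hlt : Rabs (t' - t) * M < d).
      { apply Rmult_lt_reg_r with (/ M). apply Rinv_0_lt_compat; auto.
        rewrite Rmult_assoc, Rinv_r by lra. rewrite Rmult_1_r. auto. }
      pose proof (Rabs_pos (t'-t)).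
      apply d2_lt; unfold seg; simpl.
      - replace ((1 - t') * fst a + t' * fst b - ((1 - t) * fst a + t * fst b)) with ((t'-t)*(fst b - fst a)) by ring.
        rewrite Rabs_mult. pose proof (Rabs_pos (snd b - snd a)).
        assert (Rabs (t'-t) * Rabs (fst b - fst a) <= Rabs (t'-t) * M) by (apply Rmult_le_compat_l; unfold M; lra). lra.
      - replace ((1 - t') * snd a + t' * snd b - ((1 - t) * snd a + t * snd b)) with ((t'-t)*(snd b - snd a)) by ring.
        rewrite Rabs_mult. pose proof (Rabs_pos (fst b - fst a)).
        assert (Rabs (t'-t) * Rabs (snd b - snd a) <= Rabs (t'-t) * M) by (apply Rmult_le_compat_l; unfold M; lra). lra. }
    pose proof (H _ Hd2). pose proof (d2_snd (g (seg t')) (g (seg t))).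
    unfold phi. replace (snd (g (seg t')) - c - (snd (g (seg t)) - c)) with (snd (g (seg t')) - snd (g (seg t))) by ring. lra. }
  assert (E0 : seg 0 = a) by (unfold seg; destruct a; simpl; f_equal; ring).
  assert (E1 : seg 1 = b) by (unfold seg; destruct b; simpl; f_equal; ring).
  assert (P0 : phi 0 < 0) by (unfold phi; rewrite E0; unfold a; rewrite Hgf; lra).
  assert (P1 : 0 < phi 1) by (unfold phi; rewrite E1; unfold b; rewrite Hgf; lra).
  destruct (IVT phi 0 1 Hc Rlt_0_1 P0 P1) as [t [Ht Hz]].
  unfold phi in Hz.
  remember (g (seg t)) as p eqn:Hp. destruct p as [px py]. simpl in Hz.
  assert (py = c) by lra. subst py.
  pose proof (Hl px) as Hlx. rewrite Hp, Hfg in Hlx.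
  unfold seg in Hlx; simpl in Hlx.
  assert (0 <= (1-t)*(snd a - c)) by (apply Rmult_le_pos; lra).
  assert (0 <= t*(snd b - c)) by (apply Rmult_le_pos; lra).
  lra.
Qed.

Lemma P_from_cross f g c : is_homeo f g -> (forall x, snd (f (x,c)) < c) ->
  (exists w2, c < snd w2 /\ c <= snd (f w2)) -> forall w, snd w <= c -> snd (f w) < c.
Proof.
  intros Hh Hl [w2 [H1 H2]] w Hw.
  destruct (Rle_lt_or_eq_dec _ _ Hw) as [Hlt|Heq].
  - destruct (Rlt_or_le (snd (f w)) c) as [|Hge]; auto.
    exfalso; eapply cross; eauto.
  - destruct w as [x y]; simpl in Heq; subst; auto.
Qed.

Lemma seg_in_band f lo hi : (forall w, snd w <= lo -> snd (f w) < lo) ->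
  (forall w, snd w <= hi -> snd (f w) < hi) -> forall n z, band lo hi z ->
  band lo hi (Nat.iter n f z) -> forall k, (k <= n)%nat -> band lo hi (Nat.iter k f z).
Proof.
  intros Plo Phi n z Hz Hn k Hk.
  unfold band in *.
  assert (Hup : forall j, snd (Nat.iter j f z) <= hi).
  { induction j; simpl; [lra|]. left; apply Phi; auto. }
  split; [|apply Hup].
  destruct (Rlt_or_le (snd (Nat.iter k f z)) lo) as [Hlt|]; auto.
  exfalso.
  assert (Hd : forall j, snd (Nat.iter (j + k) f z) < lo).
  { induction j; simpl; auto. apply Plo; lra. }
  replace n with ((n - k) + k)%nat in Hn by lia.
  specialize (Hd (n-k)%nat). lra.
Qed.

Lemma inv_lo f g lo hi : is_homeo f g -> (forall x, snd (f (x,lo)) < lo) ->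
  (exists z, Theta f g (band lo hi) z) -> forall w, snd w <= lo -> snd (f w) < lo.
Proof.
  intros Hh Hl [z [Hz Hn]].
  apply (P_from_cross f g lo Hh Hl).
  exists z. pose proof (Hn 1%Z) as H1. simpl in H1. unfold band in *.
  split; [|lra].
  destruct (Rle_lt_or_eq_dec _ _ (proj1 Hz)) as [|Heq]; auto.
  destruct z as [x y]; simpl in Heq; subst. pose proof (Hl x). lra.
Qed.

Lemma inv_hi f g lo hi : is_homeo f g -> commT f -> lo < hi ->
  (forall x, snd (f (x,hi)) < hi) ->
  (forall w, snd w <= lo -> snd (f w) < lo) -> forall w, snd w <= hi -> snd (f w) < hi.
Proof.
  intros Hh Hc Hlh Hl Plo.
  apply (P_from_cross f g hi Hh Hl).
  destruct (bound_band (fun w => snd (f w)) lo hi) as [K HK].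
  { apply rcont_snd. apply Hh. }
  { intros k z. rewrite commT_Z; auto. }
  pose proof Hh as [_ [_ [Hfg Hgf]]].
  set (q := (0, Rabs hi + K + 1)).
  assert (HK0 : 0 <= K).
  { specialize (HK (0,hi)). simpl in HK. pose proof (Rabs_pos (snd (f (0,hi)))). lra. }
  pose proof (Rle_abs hi).
  exists (g q). rewrite Hfg. unfold q; simpl. split; [|lra].
  destruct (Rlt_or_le hi (snd (g q))) as [|Hle]; auto.
  exfalso.
  destruct (Rle_or_lt (snd (g q)) lo) as [Hlo|Hlo].
  - pose proof (Plo _ Hlo) as Hq. rewrite Hfg in Hq. unfold q in Hq; simpl in Hq. lra.
  - specialize (HK (g q)). rewrite Hfg in HK. unfold q in HK; simpl in HK.
    assert (Hb : lo <= snd (g q) <= hi) by lra. specialize (HK Hb).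
    pose proof (Rle_abs (Rabs hi + K + 1)). pose proof (Rabs_pos hi). lra.
Qed.

Definition ThN (f g : R2 -> R2) (E : R2 -> Prop) z :=
  forall n : nat, E (Nat.iter n f z) /\ E (Nat.iter n g z).
Definition KN (f g : R2 -> R2) (E : R2 -> Prop) (N : nat) z :=
  forall n : nat, (n <= N)%nat -> E (Nat.iter n f z) /\ E (Nat.iter n g z).

Lemma Theta_ThN f g E z : Theta f g E z -> ThN f g E z.
Proof.
  intros [H0 H] n. destruct n as [|n]; [simpl; auto|].
  split.
  - specialize (H (Z.pos (Pos.of_succ_nat n))). simpl in H. rewrite SuccNat2Pos.id_succ in H. auto.
  - specialize (H (Z.neg (Pos.of_succ_nat n))). simpl in H. rewrite SuccNat2Pos.id_succ in H. auto.
Qed.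

Lemma ThN_Theta f g E z : ThN f g E z -> Theta f g E z.
Proof.
  intros H. split; [apply (H 0%nat)|].
  intros [|p|p]; simpl; [apply (H 0%nat)|apply H|apply H].
Qed.

Lemma ThN_f f g E z : is_homeo f g -> ThN f g E z -> ThN f g E (f z).
Proof.
  intros [_ [_ [Hfg Hgf]]] H n. split.
  - rewrite <- Nat.iter_succ_r. apply H.
  - destruct n as [|n].
    + simpl; apply (H 1%nat).
    + rewrite Nat.iter_succ_r, Hgf. apply H.
Qed.

Lemma ThN_iter f g E z L : is_homeo f g -> ThN f g E z -> ThN f g E (Nat.iter L f z).
Proof. intros Hh H; induction L; simpl; auto. apply ThN_f; auto. Qed.



Lemma back_iter f g z : is_homeo f g -> forall i m, Nat.iter i g (Nat.iter (i + m) f z) = Nat.iter m f z.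
Proof.
  intros [_ [_ [Hfg Hgf]]] i. induction i; intros m; [simpl; auto|].
  rewrite Nat.iter_succ_r. replace (S i + m)%nat with (S (i + m)) by lia.
  rewrite Nat.iter_succ, Hgf. apply IHi.
Qed.

Lemma away h lo hi p : continuous2 h -> ~ band lo hi (h p) ->
  exists d, 0 < d /\ forall w, Defs.d2 w p < d -> ~ band lo hi (h w).
Proof.
  intros Hc Hn. unfold band in *.
  assert (Hs : snd (h p) < lo \/ hi < snd (h p)).
  { destruct (Rlt_or_le (snd (h p)) lo); auto. destruct (Rlt_or_le hi (snd (h p))); auto. exfalso; apply Hn; auto. }
  destruct Hs as [Hs|Hs].
  - destruct (Hc p (lo - snd (h p))) as [d [Hd H]]; [lra|].
    exists d; split; auto. intros w Hw Hb. pose proof (H w Hw). pose proof (d2_snd (h w) (h p)).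
    pose proof (Rle_abs (snd (h w) - snd (h p))). lra.
  - destruct (Hc p (snd (h p) - hi)) as [d [Hd H]]; [lra|].
    exists d; split; auto. intros w Hw Hb. pose proof (H w Hw). pose proof (d2_snd (h w) (h p)).
    pose proof (Rle_abs (- (snd (h w) - snd (h p)))). rewrite Rabs_Ropp in *. lra.
Qed.

Lemma KN_shift f g lo hi N w k : is_homeo f g -> commT f -> KN f g (band lo hi) N w ->
  KN f g (band lo hi) N (shr (IZR k) w).
Proof.
  intros Hh Hc H n Hn. destruct (H n Hn) as [H1 H2].
  rewrite (commT_Z (Nat.iter n f)), (commT_Z (Nat.iter n g)).
  - unfold band, shr in *; simpl; auto.
  - apply commT_iter. eapply commT_inv; eauto.
  - apply commT_iter; auto.
Qed.

Lemma approx f g lo hi (phi : R2 -> R) : is_homeo f g -> commT f -> rcont phi ->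
  (forall k z, phi (shr (IZR k) z) = phi z) -> forall c eta, 0 < eta ->
  (forall w, ThN f g (band lo hi) w -> phi w < c) ->
  exists N, forall w, KN f g (band lo hi) N w -> phi w < c + eta.
Proof.
  intros Hh Hc Hphi Hs c eta He HT.
  pose proof Hh as [Hf [Hg _]].
  destruct (cover 0 1 lo hi (fun x y N => phi (x,y) < c + eta \/ ~ KN f g (band lo hi) N (x,y))) as [M HM].
  - intros u v _ _.
    destruct (classic (ThN f g (band lo hi) (u,v))) as [Ht|Ht].
    + destruct (Hphi (u,v) eta He) as [d [Hd H]]. exists d; split; auto. exists 0%nat.
      intros x y Hx Hy. left.
      assert (Hw : Defs.d2 (x,y) (u,v) < d) by (apply d2_lt; simpl; auto).
      pose proof (H _ Hw). pose proof (HT _ Ht). pose proof (Rle_abs (phi (x, y) - phi (u, v))). lra.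
    + unfold ThN in Ht. apply not_all_ex_not in Ht. destruct Ht as [n Hn].
      apply not_and_or in Hn.
      assert (Hex : exists h, continuous2 h /\ ~ band lo hi (h (u,v)) /\
                (forall w, KN f g (band lo hi) n w -> band lo hi (h w))).
      { destruct Hn as [Hn|Hn].
        - exists (Nat.iter n f). split; [apply cont_iter; auto|]. split; auto.
          intros w Hw. apply (Hw n (le_n n)).
        - exists (Nat.iter n g). split; [apply cont_iter; auto|]. split; auto.
          intros w Hw. apply (Hw n (le_n n)). }
      destruct Hex as [h [Hch [Hnb Hk]]].
      destruct (away h lo hi (u,v) Hch Hnb) as [d [Hd H]].
      exists d; split; auto. exists n. intros x y Hx Hy. right. intros HK.
      apply (H (x,y)); [apply d2_lt; simpl; auto|]. apply Hk; auto.
  - exists M. intros w Hw.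
    destruct (to_unit w) as [k Hk].
    pose proof (KN_shift f g lo hi M w k Hh Hc Hw) as Hw'.
    assert (Hy : lo <= snd w <= hi) by (destruct (Hw 0%nat (Nat.le_0_l _)) as [H0 _]; exact H0).
    destruct (HM (fst w + IZR k) (snd w) Hk Hy) as [N [HN [HP|HP]]].
    + rewrite <- (Hs k w). exact HP.
    + exfalso. apply HP. intros n Hn. apply Hw'. lia.
Qed.

Definition D (f : R2 -> R2) (n : nat) (z : R2) : R := fst (Nat.iter n f z) - fst z.

Lemma D_add f a b z : D f (a + b) z = D f a (Nat.iter b f z) + D f b z.
Proof. unfold D; rewrite Nat.iter_add; ring. Qed.

Lemma sabs s x : s = 1 \/ s = -1 -> s * x <= Rabs x.
Proof. intros [->| ->]; [rewrite Rmult_1_l; apply Rle_abs|].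
  replace (-1 * x) with (- x) by ring. rewrite <- Rabs_Ropp. apply Rle_abs. Qed.

Lemma Dbound f lo hi C : (forall w, band lo hi w -> Rabs (D f 1 w) <= C) ->
  forall n z, (forall k, (k < n)%nat -> band lo hi (Nat.iter k f z)) -> Rabs (D f n z) <= INR n * C.
Proof.
  intros HC n; induction n; intros z Hz.
  - unfold D; simpl. replace (fst z - fst z) with 0 by ring. rewrite Rabs_R0; lra.
  - replace (S n) with (1 + n)%nat by lia. rewrite D_add.
    eapply Rle_trans; [apply Rabs_triang|].
    rewrite plus_INR; simpl (INR 1).
    assert (H1 : Rabs (D f 1 (Nat.iter n f z)) <= C) by (apply HC, Hz; lia).
    assert (H2 : Rabs (D f n z) <= INR n * C) by (apply IHn; intros; apply Hz; lia).
    lra.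
Qed.

Lemma blocks f g lo hi N L s gam C : (1 <= L)%nat -> s = 1 \/ s = -1 -> 0 <= C ->
  (forall w, band lo hi w -> Rabs (D f 1 w) <= C) ->
  (forall w, KN f g (band lo hi) N w -> s * D f L w <= INR L * gam) ->
  forall k w, (forall i, (i <= k)%nat -> KN f g (band lo hi) N (Nat.iter i f w)) ->
  s * D f k w <= INR k * gam + INR L * (C + Rabs gam).
Proof.
  intros HL Hs HC0 HC Hb k.
  induction k as [k IH] using lt_wf_ind. intros w Hw.
  destruct (Nat.lt_ge_cases k L) as [Hk|Hk].
  - assert (Hd : Rabs (D f k w) <= INR k * C).
    { apply (Dbound f lo hi C HC). intros i Hi. destruct (Hw i ltac:(lia) 0%nat (Nat.le_0_l _)) as [H _]. exact H. }
    pose proof (sabs s (D f k w) Hs).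
    assert (INR k <= INR L) by (apply le_INR; lia).
    pose proof (pos_INR k).
    assert (INR k * C <= INR L * C) by (apply Rmult_le_compat_r; lra).
    assert (- (INR k * Rabs gam) <= INR k * gam).
    { pose proof (Rle_abs (- gam)). rewrite Rabs_Ropp in H3.
      assert (INR k * (- gam) <= INR k * Rabs gam) by (apply Rmult_le_compat_l; lra). lra. }
    assert (INR k * Rabs gam <= INR L * Rabs gam) by (apply Rmult_le_compat_r; [apply Rabs_pos| lra]).
    lra.
  - replace k with ((k - L) + L)%nat by lia. rewrite D_add.
    assert (H1 : s * D f (k - L) (Nat.iter L f w) <= INR (k - L) * gam + INR L * (C + Rabs gam)).
    { apply IH; [lia|]. intros i Hi. rewrite <- Nat.iter_add. apply Hw. lia. }
    assert (H2 : s * D f L w <= INR L * gam) by (apply Hb; change w with (Nat.iter 0 f w); apply (Hw 0%nat); lia).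
    rewrite plus_INR. lra.
Qed.

Lemma segment f g lo hi N L s gam C : is_homeo f g -> (1 <= L)%nat -> s = 1 \/ s = -1 -> 0 <= C ->
  (forall w, band lo hi w -> Rabs (D f 1 w) <= C) ->
  (forall w, KN f g (band lo hi) N w -> s * D f L w <= INR L * gam) ->
  forall n z, (2 * N <= n)%nat -> (forall i, (i <= n)%nat -> band lo hi (Nat.iter i f z)) ->
  s * D f n z <= INR n * gam + (2 * INR N * C + INR L * (C + Rabs gam) + 2 * INR N * Rabs gam).
Proof.
  intros Hh HL Hs HC0 HC Hb n z Hn Hz.
  set (k := (n - 2 * N)%nat).
  replace n with (N + (k + N))%nat by (unfold k; lia).
  rewrite D_add, D_add.
  assert (E1 : Rabs (D f N (Nat.iter (k + N) f z)) <= INR N * C).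
  { apply (Dbound f lo hi C HC). intros i Hi. rewrite <- Nat.iter_add. apply Hz. unfold k; lia. }
  assert (E2 : Rabs (D f N z) <= INR N * C).
  { apply (Dbound f lo hi C HC). intros i Hi. apply Hz. lia. }
  assert (E3 : s * D f k (Nat.iter N f z) <= INR k * gam + INR L * (C + Rabs gam)).
  { apply (blocks f g lo hi N L s gam C HL Hs HC0 HC Hb).
    intros i Hi n' Hn'. rewrite <- (Nat.iter_add i N). split.
    - rewrite <- Nat.iter_add. apply Hz. unfold k; lia.
    - replace (i + N)%nat with (n' + (i + N - n'))%nat by lia.
      rewrite back_iter; auto. apply Hz. unfold k; lia. }
  pose proof (sabs s (D f N (Nat.iter (k + N) f z)) Hs).
  pose proof (sabs s (D f N z) Hs).
  assert (Hk : INR k * gam <= INR (N + (k + N)) * gam + 2 * INR N * Rabs gam).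
  { rewrite !plus_INR. pose proof (Rle_abs (-gam)). rewrite Rabs_Ropp in H1.
    assert (INR N * (- gam) <= INR N * Rabs gam) by (apply Rmult_le_compat_l; [apply pos_INR| lra]). nra. }
  lra.
Qed.

Lemma abs_s s x : s = 1 \/ s = -1 -> Rabs (s * x) = Rabs x.
Proof. intros [->| ->]; [rewrite Rmult_1_l; auto|]. replace (-1*x) with (-x) by ring. apply Rabs_Ropp. Qed.

Lemma ratio_bound s d n C : s = 1 \/ s = -1 -> 0 < n -> Rabs d <= n * C -> Rabs (s * d / n) <= C.
Proof.
  intros Hs Hn H.
  assert (E : s * d = (s * d / n) * n) by (field; lra).
  assert (E2 : Rabs (s * d) = Rabs (s * d / n) * n).
  { rewrite E at 1. rewrite Rabs_mult, (Rabs_right n); lra. }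
  rewrite abs_s in E2 by auto.
  apply Rmult_le_reg_r with n; auto. lra.
Qed.

Lemma rcont_scale s phi : s = 1 \/ s = -1 -> rcont phi -> rcont (fun w => s * phi w).
Proof.
  intros Hs Hc z eps He. destruct (Hc z eps He) as [d [Hd H]]. exists d; split; auto.
  intros w Hw. replace (s * phi w - s * phi z) with (s * (phi w - phi z)) by ring.
  rewrite abs_s; auto.
Qed.

Lemma D_shift f k L z : commT f -> D f L (shr (IZR k) z) = D f L z.
Proof.
  intros Hc. unfold D. rewrite (commT_Z (Nat.iter L f)) by (apply commT_iter; auto).
  unfold shr; simpl; ring.
Qed.

Lemma sign_part f g lo hi s C z0 : is_homeo f g -> commT f -> s = 1 \/ s = -1 -> 0 <= C ->
  (forall w, band lo hi w -> Rabs (D f 1 w) <= C) ->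
  ThN f g (band lo hi) z0 ->
  (forall w, snd w <= lo -> snd (f w) < lo) -> (forall w, snd w <= hi -> snd (f w) < hi) ->
  exists beta, rot_set f (Theta f g (band lo hi)) (Fin (s * beta)) /\
     forall x, rot_set f (band lo hi) (Fin x) -> s * x <= beta.
Proof.
  intros Hh Hc Hs HC0 HC Hz0 Plo Phi.
  set (E := band lo hi).
  set (T := fun (m : nat) t => exists n z, (m <= n)%nat /\ ThN f g E z /\ t = s * D f n z / INR n).
  assert (Tmono : forall m m' t, (m <= m')%nat -> T m' t -> T m t).
  { intros m m' t Hm [n [z [Hn [Hz Ht]]]]. exists n, z. split; [lia| split; auto]. }
  assert (Tb : forall m t, (1 <= m)%nat -> T m t -> Rabs t <= C).
  { intros m t Hm [n [z [Hn [Hz Ht]]]]. subst t. apply ratio_bound; auto.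
    - apply lt_0_INR; lia.
    - apply (Dbound f lo hi C HC). intros k _. apply Hz. }
  assert (Tne : forall m, T m (s * D f m z0 / INR m)).
  { intros m. exists m, z0. split; [lia| split; auto]. }
  set (U := fun u => exists m, (1 <= m)%nat /\ forall t, T m t -> t <= u).
  set (V := fun v => U (- v)).
  assert (Vb : bound V).
  { exists C. intros v [m [Hm Hv]]. specialize (Hv _ (Tne m)).
    pose proof (Tb m _ Hm (Tne m)). pose proof (Rle_abs (- (s * D f m z0 / INR m))).
    rewrite Rabs_Ropp in H0. lra. }
  assert (Vne : exists v, V v).
  { exists (- C). unfold V. rewrite Ropp_involutive. exists 1%nat. split; auto.
    intros t Ht. pose proof (Tb 1%nat t (le_n 1) Ht). pose proof (Rle_abs t). lra. }
  destruct (completeness V Vb Vne) as [lam [Hub Hlub]].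
  set (beta := - lam).
  assert (Blow : forall u, U u -> beta <= u).
  { intros u Hu. assert (V (- u)) by (unfold V; rewrite Ropp_involutive; auto).
    pose proof (Hub _ H). unfold beta; lra. }
  assert (Bmax : forall b, (forall u, U u -> b <= u) -> b <= beta).
  { intros b Hb. assert (is_upper_bound V (- b)).
    { intros v Hv. pose proof (Hb _ Hv). lra. }
    pose proof (Hlub _ H). unfold beta; lra. }
  assert (Pi : forall eps, 0 < eps -> exists m, (1 <= m)%nat /\ forall t, T m t -> t < beta + eps).
  { intros eps He. apply NNPP. intros Hn.
    assert (beta + eps <= beta); [|lra].
    apply Bmax. intros u [m [Hm Hu]].
    destruct (Rlt_or_le u (beta + eps)) as [Hl|]; auto.
    exfalso; apply Hn. exists m. split; auto. intros t Ht. pose proof (Hu t Ht). lra. }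
  assert (Pii : forall m e, (1 <= m)%nat -> 0 < e -> exists t, T m t /\ Rabs (t - beta) < e).
  { intros m e Hm He. destruct (Pi e He) as [m1 [Hm1 H1]].
    assert (Hex : exists t, T (Nat.max m m1) t /\ beta - e < t).
    { apply NNPP. intros Hn.
      assert (U (beta - e)).
      { exists (Nat.max m m1). split; [lia|]. intros t Ht.
        destruct (Rlt_or_le (beta - e) t) as [Hl|]; auto. exfalso; apply Hn; exists t; auto. }
      pose proof (Blow _ H). lra. }
    destruct Hex as [t [Ht Hlt]]. exists t. split.
    - eapply Tmono; [|apply Ht]; lia.
    - pose proof (H1 t (Tmono m1 (Nat.max m m1) t ltac:(lia) Ht)). apply Rabs_def1; lra. }
  exists beta. split.
  -
    intros m Hm e He.
    destruct (Pii m e Hm He) as [t [[n [z [Hn [Hz Ht]]]] Hte]].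
    exists (Fin ((fst (Nat.iter n f z) - fst z) / INR n)). split.
    + exists n, z. split; [lia|]. split; [apply ThN_Theta; auto|]. split; [|reflexivity].
      apply ThN_Theta, ThN_iter; auto.
    + simpl.
      assert (Hn0 : INR n <> 0) by (apply not_0_INR; lia).
      replace ((fst (Nat.iter n f z) - fst z) / INR n - s * beta) with (s * (t - beta)).
      * rewrite abs_s; auto.
      * subst t. unfold D. destruct Hs; subst s; field; auto.
  -
    intros x Hx.
    destruct (Rle_or_lt (s * x) beta) as [|Hgt]; auto. exfalso.
    set (eps := (s * x - beta) / 4).
    assert (He : 0 < eps) by (unfold eps; lra).
    destruct (Pi eps He) as [L [HL HTL]].
    set (gam := beta + 2 * eps).
    set (phi := fun w => s * D f L w).
    assert (Hphi : rcont phi).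
    { apply rcont_scale; auto. apply (rcont_disp (Nat.iter L f)). apply cont_iter. apply Hh. }
    assert (Hsh : forall k z, phi (shr (IZR k) z) = phi z).
    { intros k z. unfold phi. rewrite D_shift; auto. }
    assert (HLpos : 0 < INR L) by (apply lt_0_INR; lia).
    assert (HT : forall w, ThN f g (band lo hi) w -> phi w < INR L * (beta + eps)).
    { intros w Hw. assert (Ht : T L (s * D f L w / INR L)) by (exists L, w; split; [lia| split; auto]).
      pose proof (HTL _ Ht) as Hlt.
      unfold phi. replace (s * D f L w) with ((s * D f L w / INR L) * INR L) by (field; lra).
      rewrite (Rmult_comm (INR L)). apply Rmult_lt_compat_r; auto. }
    destruct (approx f g lo hi phi Hh Hc Hphi Hsh (INR L * (beta + eps)) (INR L * eps)
                (Rmult_lt_0_compat _ _ HLpos He) HT) as [N HN].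
    assert (Hb : forall w, KN f g (band lo hi) N w -> s * D f L w <= INR L * gam).
    { intros w Hw. pose proof (HN w Hw). unfold phi in H.
      replace (INR L * gam) with (INR L * (beta + eps) + INR L * eps) by (unfold gam; ring). lra. }
    set (Cst := 2 * INR N * C + INR L * (C + Rabs gam) + 2 * INR N * Rabs gam).
    assert (HCst : 0 <= Cst).
    { unfold Cst. pose proof (pos_INR N). pose proof (Rabs_pos gam).
      assert (0 <= INR N * C) by (apply Rmult_le_pos; lra).
      assert (0 <= INR L * (C + Rabs gam)) by (apply Rmult_le_pos; lra).
      assert (0 <= INR N * Rabs gam) by (apply Rmult_le_pos; lra). lra. }
    destruct (nat_above (Cst / eps + 1)) as [M' HM'].
    set (m := Nat.max (2 * N) (Nat.max 1 M')).
    destruct (Hx m ltac:(unfold m; lia) eps He) as [y [[n [z [Hn [Hz [Hzn Hy]]]]] Hball]].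
    subst y. simpl in Hball.
    assert (Hall : forall i, (i <= n)%nat -> band lo hi (Nat.iter i f z)).
    { apply (seg_in_band f lo hi Plo Phi n z Hz Hzn). }
    pose proof (segment f g lo hi N L s gam C Hh HL Hs HC0 HC Hb n z ltac:(unfold m in Hn; lia) Hall) as Hseg.
    fold Cst in Hseg.
    assert (Hnpos : 0 < INR n) by (apply lt_0_INR; unfold m in Hn; lia).
    assert (HnM : INR M' <= INR n) by (apply le_INR; unfold m in Hn; lia).
    assert (HCn : Cst < eps * INR n).
    { assert (Cst / eps < INR n) by lra.
      replace Cst with ((Cst / eps) * eps) by (field; lra).
      rewrite (Rmult_comm eps). apply Rmult_lt_compat_r; auto. }
    set (q := (fst (Nat.iter n f z) - fst z) / INR n) in *.
    assert (HDq : D f n z = INR n * q) by (unfold q, D; field; lra).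
    assert (Hsq : beta + 3 * eps < s * q).
    { pose proof (sabs s (x - q) Hs). rewrite <- Rabs_Ropp in H.
      replace (- (x - q)) with (q - x) in H by ring. unfold eps in *. lra. }
    assert (H1 : INR n * (beta + 3 * eps) < INR n * (s * q)) by (apply Rmult_lt_compat_l; auto).
    assert (H2 : INR n * gam + eps * INR n = INR n * (beta + 3 * eps)) by (unfold gam; ring).
    rewrite HDq in Hseg.
    replace (s * (INR n * q)) with (INR n * (s * q)) in Hseg by ring.
    lra.
Qed.

Lemma rot_finite f lo hi C x : 0 <= C ->
  (forall w, band lo hi w -> Rabs (D f 1 w) <= C) ->
  (forall w, snd w <= lo -> snd (f w) < lo) -> (forall w, snd w <= hi -> snd (f w) < hi) ->
  rot_set f (band lo hi) x -> exists r, x = Fin r.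
Proof.
  intros HC0 HC Plo Phi Hx.
  assert (He : 0 < 1 / (C + 1)) by (apply Rdiv_lt_0_compat; lra).
  assert (Hinv : 1 / (1 / (C + 1)) = C + 1) by (field; lra).
  destruct (Hx 1%nat (le_n 1) _ He) as [y [[n [z [Hn [Hz [Hzn Hy]]]]] Hb]].
  assert (Hv : Rabs ((fst (Nat.iter n f z) - fst z) / INR n) <= C).
  { replace ((fst (Nat.iter n f z) - fst z) / INR n) with (1 * D f n z / INR n) by (unfold D; rewrite Rmult_1_l; reflexivity).
    apply ratio_bound; auto. apply lt_0_INR; lia.
    apply (Dbound f lo hi C HC). intros k Hk. apply (seg_in_band f lo hi Plo Phi n z Hz Hzn). lia. }
  subst y. destruct x as [r| |]; [exists r; auto| |]; simpl in Hb; rewrite Hinv in Hb;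
  pose proof (Rle_abs ((fst (Nat.iter n f z) - fst z) / INR n));
  pose proof (Rle_abs (- ((fst (Nat.iter n f z) - fst z) / INR n))); rewrite Rabs_Ropp in *; lra.
Qed.

Lemma main_band f g lo hi : is_homeo f g -> commT f -> lo < hi ->
  (forall x, snd (f (x,lo)) < lo) -> (forall x, snd (f (x,hi)) < hi) ->
  (exists z, Theta f g (band lo hi) z) ->
  forall x, rot_set f (band lo hi) x -> conv_hull (rot_set f (Theta f g (band lo hi))) x.
Proof.
  intros Hh Hc Hlh Hlo Hhi Hex.
  pose proof (inv_lo f g lo hi Hh Hlo Hex) as Plo.
  pose proof (inv_hi f g lo hi Hh Hc Hlh Hhi Plo) as Phi.
  destruct Hex as [z0 Hz0]. apply Theta_ThN in Hz0.
  destruct (bound_band (fun w => D f 1 w) lo hi) as [C HC].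
  { apply (rcont_disp (Nat.iter 1 f)). apply cont_iter. apply Hh. }
  { intros k z. apply D_shift; auto. }
  assert (HC0 : 0 <= C) by (pose proof (HC (0,lo)); simpl in H; pose proof (Rabs_pos (D f 1 (0,lo))); lra).
  assert (HC' : forall w, band lo hi w -> Rabs (D f 1 w) <= C) by (intros w Hw; apply HC; apply Hw).
  destruct (sign_part f g lo hi 1 C z0 Hh Hc (or_introl eq_refl) HC0 HC' Hz0 Plo Phi) as [b1 [Hb1 Ub1]].
  destruct (sign_part f g lo hi (-1) C z0 Hh Hc (or_intror eq_refl) HC0 HC' Hz0 Plo Phi) as [b2 [Hb2 Ub2]].
  intros x Hx.
  destruct (rot_finite f lo hi C x HC0 HC' Plo Phi Hx) as [r ->].
  exists (Fin (-1 * b2)), (Fin (1 * b1)). split; auto. split; auto.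
  pose proof (Ub1 r Hx). pose proof (Ub2 r Hx). simpl. lra.
Qed.

Theorem proposition6p7 (f g : R2 -> R2) (c0 c1 c2 : R) :
  is_homeo f g -> isotopic_to_id f -> (forall z, f (Tr z) = Tr (f z)) ->
  (* (H1) *)
  c1 < c0 -> c2 < c1 ->
  (forall x, snd (f (x, c0)) < c0) ->
  (forall x, snd (f (x, c1)) < c1) ->
  (forall x, snd (f (x, c2)) < c2) ->
  (* (H2) *)
  (forall n : nat, (1 <= n)%nat -> exists x, snd (Nat.iter n f (x, c0)) = c2) ->
  (* (H3) *)
  (exists z, Theta f g (band c1 c0) z) ->
  (exists z, Theta f g (band c2 c1) z) ->
  sub_pos (rot_set f (Theta f g (band c1 c0))) ->
  sub_neg (rot_set f (Theta f g (band c2 c1))) ->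
  (forall x, rot_set f (band c1 c0) x ->
             conv_hull (rot_set f (Theta f g (band c1 c0))) x) /\
  (forall x, rot_set f (band c2 c1) x ->
             conv_hull (rot_set f (Theta f g (band c2 c1))) x) /\
  sub_pos (rot_set f (band c1 c0)) /\
  sub_neg (rot_set f (band c2 c1)).
Proof.
  intros Hh _ Hc H10 H21 L0 L1 L2 _ T0 T1 SP SN.
  pose proof (main_band f g c1 c0 Hh Hc H10 L1 L0 T0) as M0.
  pose proof (main_band f g c2 c1 Hh Hc H21 L2 L1 T1) as M1.
  split; [exact M0|]. split; [exact M1|]. split.
  - intros x Hx. destruct (M0 x Hx) as [a [b [Ha [Hb [Hax Hxb]]]]].
    destruct (SP a Ha) as [ra [-> Hra]]. destruct (SP b Hb) as [rb [-> Hrb]].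
    destruct x as [r| |]; simpl in *; try contradiction. exists r; split; auto; lra.
  - intros x Hx. destruct (M1 x Hx) as [a [b [Ha [Hb [Hax Hxb]]]]].
    destruct (SN a Ha) as [ra [-> Hra]]. destruct (SN b Hb) as [rb [-> Hrb]].
    destruct x as [r| |]; simpl in *; try contradiction. exists r; split; auto; lra.
Qed.
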